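(* Let $k$ be a positive integer and $G$ a finite, simple, undirected, connected graph of order $n\ge2$. (a) If $O_{R,k}(G)=\mathcal{M}$, then $\dim_k(G)\le M_{R,k}(G)\le M'_{R,k}(G)\le\lfloor n/2\rfloor$, $M_{R,k+1}(G)\le M_{R,k}(G)$ and $M'_{R,k+1}(G)\le M'_{R,k}(G)$. (b) If $O_{R,k}(G)=\mathcal{B}$, then $B'_{R,k}(G)\le B_{R,k}(G)\le\lfloor n/2\rfloor$; moreover, for $k>1$, $B_{R,k}(G)\ge B_{R,k-1}(G)$ and $B'_{R,k}(G)\ge B'_{R,k-1}(G)$. (c) If $\mathrm{diam}(G)\in\{1,2\}$ or $k\ge\mathrm{diam}(G)-1$, then $M_{R,k}(G)=M_R(G)$ and $M'_{R,k}(G)=M'_R(G)$ if $O_R(G)=\mathcal{M}$, and $B_{R,k}(G)=B_R(G)$ and $B'_{R,k}(G)=B'_R(G)$ if $O_R(G)=\mathcal{B}$. (d) If $X$ is a pairing distance-$k$ resolving set of $G$ with $|\bigcup X|=2\dim_k(G)$, then $M_{R,k}(G)=M'_{R,k}(G)=\dim_k(G)$. (e) If $X$ is a quasi-pairing distance-$k$ resolving set of $G$ with $|\bigcup X|=2(\dim_k(G)-1)$ and $O_{R,k}(G)=\mathcal{N}$, then $N_{R,k}(G)=\dim_k(G)$.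
   Context: $d$ is the shortest-path distance, $\mathrm{diam}(G)$ the diameter, and $d_k(x,y)=\min\{d(x,y),k+1\}$. A set $S\subseteq V(G)$ is a distance-$k$ resolving set if for all distinct $x,y$ some $z\in S$ has $d_k(x,z)\ne d_k(y,z)$ (a resolving set if this holds with $d$); $\dim_k(G)$ is the minimum size of a distance-$k$ resolving set. In the Maker-Breaker distance-$k$ resolving game (MB$k$RG), Maker and Breaker alternately select a not-yet-chosen vertex; Maker wins if his selected vertices form a distance-$k$ resolving set, Breaker wins otherwise; in the $M$-game ($B$-game) Maker (Breaker) moves first. $O_{R,k}(G)=\mathcal{M}$ if Maker wins both games, $\mathcal{B}$ if Breaker wins both, $\mathcal{N}$ if the first player wins. The Maker-Breaker resolving game and its outcome $O_R(G)$ are defined the same way with resolving sets. If $O_{R,k}(G)=\mathcal{M}$, $M_{R,k}(G)$ ($M'_{R,k}(G)$) is the minimum number of moves Maker needs to win the $M$-game ($B$-game); if $O_{R,k}(G)=\mathcal{B}$, $B_{R,k}(G)$ ($B'_{R,k}(G)$) is the minimum number of moves Breaker needs to win the $M$-game ($B$-game); if $O_{R,k}(G)=\mathcal{N}$, $N_{R,k}(G)$ is the minimum number of moves for the first player (Maker) to win the $M$-game. $M_R,M'_R,B_R,B'_R$ are defined analogously for the resolving game. For a positive integer $\alpha$ and a family $X=\{\{u_1,w_1\},\dots,\{u_\alpha,w_\alpha\}\}$ of pairwise disjoint 2-subsets of $V(G)$, a transversal is a set $Z$ of size $\alpha$ meeting every $\{u_i,w_i\}$. $X$ is a pairing distance-$k$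 resolving set if every transversal is a distance-$k$ resolving set; $X$ is a quasi-pairing distance-$k$ resolving set if no transversal is a distance-$k$ resolving set but some $v\in V(G)-\bigcup X$ makes $Z\cup\{v\}$ a distance-$k$ resolving set for every transversal $Z$. *)

(* Defs.v *)
From mathcomp Require Import all_boot.
From Stdlib Require Import ClassicalEpsilon.

Set Implicit Arguments.
Unset Strict Implicit.
Unset Printing Implicit Defensive.

(* The least natural number satisfying P (unspecified if none exists). *)
Definition nat_min (P : nat -> Prop) : nat :=
  epsilon (inhabits 0%N) (fun n => P n /\ forall m, P m -> n <= m).

Section Graph.
Variables (T : finType) (e : rel T).

Definition dist (x y : T) : nat :=
  nat_min (fun n => exists p : seq T, [/\ path e x p, last x p = y & size p = n]).

Definition diam : nat := \max_(x : T) \max_(y : T) dist x y.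

Definition dist_k (k : nat) (x y : T) : nat := minn (dist x y) k.+1.

Definition resolving_by (f : T -> T -> nat) (W : {set T}) : Prop :=
  forall x y : T, x <> y -> exists2 z, z \in W & f x z <> f y z.

Definition resolving (W : {set T}) : Prop := resolving_by dist W.
Definition k_resolving (k : nat) (W : {set T}) : Prop := resolving_by (dist_k k) W.

Definition dim_k (k : nat) : nat :=
  nat_min (fun m => exists W : {set T}, k_resolving k W /\ #|W| = m).

End Graph.

(* Maker-Breaker game on a finite vertex set T with winning family S for Maker
   (S is superset-closed in our applications).  State: Maker's set M,
   Breaker's set B, and a flag [true] = Maker to move.
   [MW S m M B t]: Maker can force that his set satisfies S using at most m
   further Maker moves. *)
Section Game.
Variables (T : finType) (S : {set T} -> Prop).

Inductive MW : nat -> {set T} -> {set T} -> bool -> Prop :=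
| MW_done m M B t : S M -> MW m M B t
| MW_maker m M B v : v \notin M :|: B -> MW m (v |: M) B false -> MW m.+1 M B true
| MW_breaker m M B : (exists v, v \notin M :|: B) ->
    (forall v, v \notin M :|: B -> MW m M (v |: B) true) -> MW m M B false.

(* [BW S m M B t]: Breaker can force, using at most m further Breaker moves,
   that Maker can no longer win, i.e. the vertices not taken by Breaker
   (Maker's vertices plus the free ones) do not satisfy S. *)
Inductive BW : nat -> {set T} -> {set T} -> bool -> Prop :=
| BW_done m M B t : ~ S (~: B) -> BW m M B t
| BW_breaker m M B v : v \notin M :|: B -> BW m M (v |: B) true -> BW m.+1 M B false
| BW_maker m M B : (exists v, v \notin M :|: B) ->
    (forall v, v \notin M :|: B -> BW m (v |: M) B false) -> BW m M B true.

(* M-game: Maker moves first; B-game: Breaker moves first. *)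
Definition maker_wins_Mgame := exists m, MW m set0 set0 true.
Definition maker_wins_Bgame := exists m, MW m set0 set0 false.
Definition breaker_wins_Mgame := exists m, BW m set0 set0 true.
Definition breaker_wins_Bgame := exists m, BW m set0 set0 false.

Definition outcome_M := maker_wins_Mgame /\ maker_wins_Bgame.
Definition outcome_B := breaker_wins_Mgame /\ breaker_wins_Bgame.
Definition outcome_N := maker_wins_Mgame /\ breaker_wins_Bgame.

Definition M_moves : nat := nat_min (fun m => MW m set0 set0 true).
Definition M'_moves : nat := nat_min (fun m => MW m set0 set0 false).
Definition B_moves : nat := nat_min (fun m => BW m set0 set0 true).
Definition B'_moves : nat := nat_min (fun m => BW m set0 set0 false).
(* N-outcome: minimum number of moves of the first player (Maker) in the M-game *)
Definition N_moves : nat := nat_min (fun m => MW m set0 set0 true).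

End Game.

Section Pairing.
Variables (T : finType).

Definition pair_family (X : {set {set T}}) : Prop :=
  0 < #|X| /\ trivIset X /\ forall P, P \in X -> #|P| = 2.

Definition transversal (X : {set {set T}}) (Z : {set T}) : Prop :=
  #|Z| = #|X| /\ forall P, P \in X -> Z :&: P != set0.

Definition pairing_res (S : {set T} -> Prop) (X : {set {set T}}) : Prop :=
  pair_family X /\ forall Z, transversal X Z -> S Z.

Definition quasi_pairing_res (S : {set T} -> Prop) (X : {set {set T}}) : Prop :=
  [/\ pair_family X, (forall Z, transversal X Z -> ~ S Z) &
      exists2 v, v \notin cover X & forall Z, transversal X Z -> S (v |: Z)].

End Pairing.

(* Main.v *)
Require Import Defs.
From Stdlib Require Import ClassicalEpsilon Classical FunctionalExtensionality.
From mathcomp Require Import all_boot zify.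
Set Implicit Arguments. Unset Strict Implicit. Unset Printing Implicit Defensive.

Lemma nat_min_spec (P : nat -> Prop) n : P n ->
  P (nat_min P) /\ forall m, P m -> nat_min P <= m.
Proof.
move=> Pn; rewrite /nat_min.
suff [x Hx] : exists n0, P n0 /\ forall m, P m -> n0 <= m.
  exact: (epsilon_spec (inhabits 0) (fun n => P n /\ forall m, P m -> n <= m) (ex_intro _ x Hx)).
have: forall N n, n <= N -> P n -> exists n0, P n0 /\ forall m, P m -> n0 <= m.
  elim=> [|N IH] n0.
    rewrite leqn0 => /eqP -> P0; exists 0; split => // m _.
  move=> le Pn0.
  case: (classic (exists m, P m /\ m < n0)) => [[m [Pm lt]]|nex].
    apply: (IH m) => //; lia.
  exists n0; split => // m Pm; rewrite leqNgt; apply/negP => lt; apply: nex; by exists m.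
by move/(_ n n (leqnn n) Pn).
Qed.

Section G.
Variables (T : finType) (S : {set T} -> Prop).
Hypothesis Hsup : forall A A' : {set T}, A \subset A' -> S A -> S A'.

Lemma MW_S_mono (S' : {set T} -> Prop) m M B t :
  (forall W, S W -> S' W) -> MW S m M B t -> MW S' m M B t.
Proof.
move=> H; elim=> {m M B t}.
- move=> m M B t SM; apply: MW_done; exact: H.
- move=> m M B v vf _ IH; exact: MW_maker vf IH.
- move=> m M B ex _ IH; exact: MW_breaker ex IH.
Qed.

Lemma MW_m_mono m M B t : MW S m M B t -> forall m', m <= m' -> MW S m' M B t.
Proof.
elim=> {m M B t}.
- move=> m M B t SM m' _; exact: MW_done.
- move=> m M B v vf _ IH [|m'] //= le; exact: MW_maker vf (IH m' le).
- move=> m M B ex _ IH m' le; apply: MW_breaker ex _ => v vf; exact: IH.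
Qed.

Lemma MW_size m M B t : MW S m M B t -> exists W, S W /\ #|W| <= #|M| + m.
Proof.
elim=> {m M B t}.
- move=> m M B t SM; exists M; split => //; exact: leq_addr.
- move=> m M B v vf _ [W [SW le]]; exists W; split => //.
  apply: leq_trans le _; rewrite cardsU1; case: (v \in M) => /=; lia.
- move=> m M B [v vf] _ IH; exact: IH vf.
Qed.

Lemma MW_cov m M B t : MW S m M B t -> S (M :|: ~: B).
Proof.
elim=> {m M B t}.
- move=> m M B t SM; apply: Hsup SM; exact: subsetUl.
- move=> m M B v vf _ IH; apply: Hsup IH.
  apply/subsetP => x; rewrite !inE; case/orP => [/orP[/eqP->|->]|->]; rewrite ?orbT //.
  move: vf; rewrite !inE negb_or => /andP[_ ->]; by rewrite orbT.
- move=> m M B [v vf] _ IH; apply: Hsup (IH v vf).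
  apply/subsetP => x; rewrite !inE negb_or; case/orP => [->|/andP[_ ->]] //; by rewrite orbT.
Qed.

Lemma MW_sets m M B t : MW S m M B t -> forall M' B' : {set T}, M \subset M' -> B' \subset B ->
  MW S m M' B' t.
Proof.
elim=> {m M B t}.
- move=> m M B t SM M' B' s1 s2; apply: MW_done; exact: Hsup SM.
- move=> m M B v vf H IH M' B' s1 s2.
  case: (boolP [exists w, w \notin M' :|: B']) => [/existsP[w wf]|nf].
    case: (boolP (v \in M' :|: B')) => vin.
      apply: (MW_maker wf); apply: IH => //.
      apply/subsetP => x; rewrite !inE => /orP[/eqP->|xM].
        move: vin vf; rewrite !inE => /orP[-> _|vB']; first by rewrite orbT.
        by rewrite (subsetP s2 _ vB') orbT.
      by rewrite (subsetP s1 _ xM) orbT.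
    apply: (MW_maker vin); apply: IH => //; exact: setUS.
  apply: MW_done; have := MW_cov H; apply: Hsup.
  apply/subsetP => x; rewrite !inE => /orP[/orP[/eqP->|xM]|xB].
  - move: nf; rewrite negb_exists => /forallP/(_ v); rewrite negbK !inE => /orP[]//.
    move=> vB'; move: vf; by rewrite !inE (subsetP s2 _ vB') orbT.
  - exact: (subsetP s1).
  - move: nf; rewrite negb_exists => /forallP/(_ x); rewrite negbK !inE => /orP[]//.
    move=> xB'; move: xB; by rewrite (subsetP s2 _ xB').
- move=> m M B [u uf] H IH M' B' s1 s2.
  case: (boolP [exists w, w \notin M' :|: B']) => [/existsP[w wf]|nf].
    apply: MW_breaker; first by exists w.
    move=> w' wf'.
    case: (boolP (w' \in B)) => wB.
      apply: (IH u uf) => //; apply/subsetP => x; rewrite !inE => /orP[/eqP->|xB'].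
        by rewrite wB orbT.
      by rewrite (subsetP s2 _ xB') orbT.
    have wf0 : w' \notin M :|: B.
      move: wf'; rewrite !inE !negb_or wB andbT => /andP[wM' _].
      apply/negP => wM; move: wM'; by rewrite (subsetP s1 _ wM).
    apply: (IH w' wf0) => //; exact: setUS.
  apply: MW_done; have := MW_cov (MW_breaker (ex_intro _ u uf) H); apply: Hsup.
  apply/subsetP => x; rewrite !inE => /orP[xM|xB].
  - exact: (subsetP s1).
  - move: nf; rewrite negb_exists => /forallP/(_ x); rewrite negbK !inE => /orP[]//.
    move=> xB'; move: xB; by rewrite (subsetP s2 _ xB').
Qed.

Lemma MW_swap m M B : MW S m M B false -> MW S m M B true.
Proof.
move=> H; have: forall m M B t, MW S m M B t -> t = false -> MW S m M B true.
  move=> {H} m0 M0 B0 t; case => //.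
  - move=> ? ? ? ? SM _; exact: MW_done.
  - move=> m1 M1 B1 [v vf] Hv _; exact: (MW_sets (Hv v vf) (subxx _) (subsetUr _ _)).
by move/(_ m M B false H erefl).
Qed.

Lemma MW_bound m M B t : MW S m M B t ->
  MW S (if t then (#|~: (M :|: B)|).+1 %/ 2 else #|~: (M :|: B)| %/ 2) M B t.
Proof.
elim=> {m M B t}.
- move=> m M B t SM; exact: MW_done.
- move=> m M B v vf _ IH; apply: (MW_m_mono (MW_maker vf IH)) => /=.
  have E : ~: ((v |: M) :|: B) = ~: (M :|: B) :\ v.
    apply/setP => x; rewrite !inE; by case: (x == v).
  rewrite E in IH *; rewrite [X in _ <= X.+1 %/ 2](cardsD1 v) inE vf /=.
  set f := #|_|; lia.
- move=> m M B [u uf] _ IH; apply: MW_breaker; first by exists u.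
  move=> v vf; apply: (MW_m_mono (IH v vf)) => /=.
  have E : ~: (M :|: (v |: B)) = ~: (M :|: B) :\ v.
    apply/setP => x; rewrite !inE; by case: (x == v); rewrite ?orbT ?orbF.
  rewrite E [X in _ <= X %/ 2](cardsD1 v) inE vf /=.
  set f := #|_|; lia.
Qed.


Lemma BW_S_mono (S' : {set T} -> Prop) m M B t :
  (forall W, S' W -> S W) -> BW S m M B t -> BW S' m M B t.
Proof.
move=> H; elim=> {m M B t}.
- move=> m M B t SM; apply: BW_done => /H; exact: SM.
- move=> m M B v vf _ IH; exact: BW_breaker vf IH.
- move=> m M B ex _ IH; exact: BW_maker ex IH.
Qed.

Lemma BW_m_mono m M B t : BW S m M B t -> forall m', m <= m' -> BW S m' M B t.
Proof.
elim=> {m M B t}.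
- move=> m M B t SM m' _; exact: BW_done.
- move=> m M B v vf _ IH [|m'] //= le; exact: BW_breaker vf (IH m' le).
- move=> m M B ex _ IH m' le; apply: BW_maker ex _ => v vf; exact: IH.
Qed.

Lemma BW_avoid m M B t : BW S m M B t -> ~ S (M :\: B).
Proof.
elim=> {m M B t}.
- move=> m M B t nS SM; apply: nS; apply: Hsup SM.
  apply/subsetP => x; rewrite !inE => /andP[]//.
- move=> m M B v vf _ IH SM; apply: IH; apply: Hsup SM.
  apply/subsetP => x; rewrite !inE; move: vf; rewrite !inE negb_or => /andP[vM _] /andP[xB xM].
  rewrite xM (negbTE xB) orbF andbT; apply/eqP => xv; move: vM; by rewrite -xv xM.
- move=> m M B [v vf] _ IH SM; apply: (IH v vf); apply: Hsup SM.
  apply/subsetP => x; rewrite !inE => /andP[-> ->]; by rewrite orbT.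
Qed.

Lemma BW_sets m M B t : BW S m M B t -> forall M' B' : {set T}, M' :\: B \subset M ->
  B \subset B' -> BW S m M' B' t.
Proof.
elim=> {m M B t}.
- move=> m M B t nS M' B' s1 s2; apply: BW_done => SB; apply: nS; apply: Hsup SB.
  by rewrite setCS.
- move=> m M B v vf H IH M' B' s1 s2.
  case: (boolP [exists w, w \notin M' :|: B']) => [/existsP[w wf]|nf].
    case: (boolP (v \in M' :|: B')) => vin.
      apply: (BW_breaker wf); apply: IH => //.
        apply: subset_trans s1; apply/subsetP => x; rewrite !inE negb_or.
        by case/andP => /andP[_ ->] ->.
      apply/subsetP => x; rewrite !inE => /orP[/eqP->|xB].
        move: vin vf; rewrite !inE => /orP[vM'|-> _]; last by rewrite orbT.
        rewrite negb_or => /andP[vM vB].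
        have : v \in M' :\: B by rewrite inE vM' vB.
        by move/(subsetP s1); rewrite (negbTE vM).
      by rewrite (subsetP s2 _ xB) orbT.
    apply: (BW_breaker vin); apply: IH.
      apply: subset_trans s1; apply/subsetP => x; rewrite !inE negb_or.
      by case/andP => /andP[_ ->] ->.
    exact: setUS.
  apply: BW_done; have := BW_avoid H; apply: contra_not; apply: Hsup.
  apply/subsetP => x; rewrite !inE => xB'.
  move: nf; rewrite negb_exists => /forallP/(_ x); rewrite negbK !inE (negbTE xB') orbF => xM'.
  have xB : x \notin B by apply/negP => xB; move: xB'; rewrite (subsetP s2 _ xB).
  have : x \in M' :\: B by rewrite inE xM' xB.
  move/(subsetP s1) => xM; rewrite xM andbT.
  rewrite (negbTE xB) orbF; apply/eqP => xv; move: vf; by rewrite -xv !inE xM.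
- move=> m M B [u uf] H IH M' B' s1 s2.
  case: (boolP [exists w, w \notin M' :|: B']) => [/existsP[w wf]|nf].
    apply: BW_maker; first by exists w.
    move=> w' wf'.
    case: (boolP (w' \in M :|: B)) => wMB.
      apply: (IH u uf) => //; apply/subsetP => x; rewrite !inE => /andP[xB].
      case/orP => [/eqP xw|xM']; last first.
        have : x \in M' :\: B by rewrite inE xM' xB.
        by move/(subsetP s1) => ->; rewrite orbT.
      move: wMB; rewrite !inE -xw (negbTE xB) orbF => ->; by rewrite orbT.
    apply: (IH w' wMB) => //; apply/subsetP => x; rewrite !inE => /andP[xB].
    case/orP => [->//|xM'].
    have : x \in M' :\: B by rewrite inE xM' xB.
    by move/(subsetP s1) => ->; rewrite orbT.
  apply: BW_done; have := BW_avoid (BW_maker (ex_intro _ u uf) H); apply: contra_not; apply: Hsup.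
  apply/subsetP => x; rewrite !inE => xB'.
  move: nf; rewrite negb_exists => /forallP/(_ x); rewrite negbK !inE (negbTE xB') orbF => xM'.
  have xB : x \notin B by apply/negP => xB; move: xB'; rewrite (subsetP s2 _ xB).
  have : x \in M' :\: B by rewrite inE xM' xB.
  by move/(subsetP s1) => ->; rewrite xB.
Qed.

Lemma BW_swap m M B : BW S m M B true -> BW S m M B false.
Proof.
move=> H; have: forall m M B t, BW S m M B t -> t = true -> BW S m M B false.
  move=> {H} m0 M0 B0 t; case => //.
  - move=> ? ? ? ? SM _; exact: BW_done.
  - move=> m1 M1 B1 [v vf] Hv _; apply: (BW_sets (Hv v vf) _ (subxx _)).
    apply/subsetP => x; rewrite !inE => /andP[_ ->]; by rewrite orbT.
by move/(_ m M B true H erefl).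
Qed.

Lemma BW_bound m M B t : BW S m M B t ->
  BW S (if t then #|~: (M :|: B)| %/ 2 else (#|~: (M :|: B)|).+1 %/ 2) M B t.
Proof.
elim=> {m M B t}.
- move=> m M B t SM; exact: BW_done.
- move=> m M B v vf _ IH; apply: (BW_m_mono (BW_breaker vf IH)) => /=.
  have E : ~: (M :|: (v |: B)) = ~: (M :|: B) :\ v.
    apply/setP => x; rewrite !inE; by case: (x == v); rewrite ?orbT ?orbF.
  rewrite E in IH *; rewrite [X in _ <= X.+1 %/ 2](cardsD1 v) inE vf /=.
  set f := #|_|; lia.
- move=> m M B [u uf] _ IH; apply: BW_maker; first by exists u.
  move=> v vf; apply: (BW_m_mono (IH v vf)) => /=.
  have E : ~: ((v |: M) :|: B) = ~: (M :|: B) :\ v.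
    apply/setP => x; rewrite !inE; by case: (x == v).
  rewrite E [X in _ <= X %/ 2](cardsD1 v) inE vf /=.
  set f := #|_|; lia.
Qed.


Section Pair.
Variables (X : {set {set T}}) (M0 : {set T}).
Hypothesis triv : trivIset X.
Hypothesis two : forall P, P \in X -> #|P| = 2.
Hypothesis Hwin : forall M : {set T}, M0 \subset M -> (forall P, P \in X -> P :&: M != set0) -> S M.

Lemma triv_eq P Q x : P \in X -> Q \in X -> x \in P -> x \in Q -> P = Q.
Proof.
move=> PX QX xP xQ; case: (eqVneq P Q) => // nPQ.
have := elimT trivIsetP triv P Q PX QX nPQ; rewrite -setI_eq0 => /eqP E.
have : x \in P :&: Q by rewrite inE xP xQ.
by rewrite E inE.
Qed.

Definition Inv (M B : {set T}) := M0 \subset M /\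
  forall P, P \in X -> (P :&: (M :|: B) == set0) || (P :&: M != set0).
Definition U (M B : {set T}) := [set P in X | P :&: (M :|: B) == set0].

Lemma pairing_win u : forall M B, Inv M B -> #|U M B| <= u -> MW S u M B false.
Proof.
elim: u => [|u IH] M B [s0 HI] cU.
  apply: MW_done; apply: Hwin => // P PX.
  case/orP: (HI P PX) => // E.
  have : P \in U M B by rewrite inE PX E.
  by move: cU; rewrite leqn0 cards_eq0 => /eqP ->; rewrite inE.
case: (set_0Vmem (U M B)) => [U0|[R RU]].
  apply: MW_done; apply: Hwin => // P PX.
  case/orP: (HI P PX) => // E.
  have : P \in U M B by rewrite inE PX E.
  by rewrite U0 inE.
move: (RU); rewrite inE => /andP[RX RE].
have [r rR] : exists r, r \in R.
  apply/set0Pn; rewrite -card_gt0 two //.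
have rfree : r \notin M :|: B.
  apply/negP => rMB; move/eqP: RE => RE.
  have : r \in R :&: (M :|: B) by rewrite inE rR rMB.
  by rewrite RE inE.
apply: MW_breaker; first by exists r.
move=> v vf.
have [R' [x [R'U xR' xf Huniq]]] : exists R' x, [/\ R' \in U M B, x \in R', x \notin M :|: (v |: B) &
    forall Q, Q \in U M B -> v \in Q -> Q = R'].
  case: (boolP [exists Q in U M B, v \in Q]) => [/existsP[Q /andP[QU vQ]]|nQ].
    move: (QU); rewrite inE => /andP[QX QE].
    have : #|Q :\ v| = 1 by move: (two QX); rewrite (cardsD1 v) vQ; case.
    move/eqP/cards1P => [w Ew].
    have wQ : w \in Q :\ v by rewrite Ew inE.
    move: wQ; rewrite !inE => /andP[wv wQ].
    exists Q, w; split => //.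
      apply/negP => wMB.
      have wMB' : w \in M :|: B.
        move: wMB; rewrite !inE (negbTE wv) /=; by [].
      move/eqP: QE => QE.
      have : w \in Q :&: (M :|: B) by rewrite inE wQ wMB'.
      by rewrite QE inE.
    move=> Q' Q'U vQ'; apply: (triv_eq (x:=v)) => //.
      by move: Q'U; rewrite inE => /andP[].
  exists R, r; split => //.
    rewrite !inE; move: rfree; rewrite !inE negb_or => /andP[/negbTE -> /negbTE ->]; rewrite orbF /=.
    apply/eqP => rv; move: nQ; rewrite negb_exists => /forallP/(_ R).
    by rewrite RU -rv rR.
  move=> Q QU vQ; move: nQ; rewrite negb_exists => /forallP/(_ Q); by rewrite QU vQ.
move: (R'U); rewrite inE => /andP[R'X R'E].
apply: (MW_maker xf); apply: IH.
  split; first by apply: subset_trans s0 (subsetUr _ _).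
  move=> P PX; case/orP: (HI P PX) => [PE|PM]; last first.
    case/set0Pn: PM => y; rewrite inE => /andP[yP yM].
    apply/orP; right; apply/set0Pn; exists y; by rewrite !inE yP yM orbT.
  have PU : P \in U M B by rewrite inE PX PE.
  case: (eqVneq P R') => [->|nPR].
    apply/orP; right; apply/set0Pn; exists x; by rewrite !inE xR' eqxx.
  apply/orP; left; apply/eqP/setP => y; rewrite !inE.
  apply/negP => /andP[yP /orP[/orP[/eqP yx|yM]|/orP[/eqP yv|yB]]].
  - by case/eqP: nPR; apply: (triv_eq (x:=x)) => //; rewrite -yx.
  - move/eqP/setP: PE => /(_ y); by rewrite !inE yP yM.
  - by case/eqP: nPR; apply: Huniq => //; rewrite -yv.
  - move/eqP/setP: PE => /(_ y); by rewrite !inE yP yB orbT.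
have sub : U (x |: M) (v |: B) \subset U M B :\ R'.
  apply/subsetP => P; rewrite !inE => /andP[PX /eqP PE].
  have PE' : P :&: (M :|: B) == set0.
    apply/eqP/setP => y; rewrite in_set0 inE; apply/negP => /andP[yP yMB].
    move/setP: PE => /(_ y); rewrite !inE yP; move: yMB; rewrite inE => /orP[->|->];
      by rewrite ?orbT.
  rewrite PX PE' !andbT; apply/eqP => PR; move/setP: PE => /(_ x).
  by rewrite !inE PR xR' eqxx.
apply: leq_trans (subset_leq_card sub) _.
by move: cU; rewrite (cardsD1 R') R'U add1n ltnS.
Qed.

End Pair.

Lemma transv_of (X : {set {set T}}) (M : {set T}) (x0 : T) : trivIset X ->
  (forall P, P \in X -> P :&: M != set0) -> exists2 Z : {set T}, Z \subset M & Defs.transversal X Z.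
Proof.
move=> triv H.
pose f P := odflt x0 [pick x in P :&: M].
have fP : forall P, P \in X -> f P \in P :&: M.
  move=> P PX; rewrite /f; case: pickP => [y //|H0].
  by case/set0Pn: (H P PX) => y; rewrite H0.
exists (f @: X).
  apply/subsetP => y /imsetP[P PX ->]; by move: (fP P PX); rewrite inE => /andP[].
split.
  apply: card_in_imset => P Q PX QX E.
  move: (fP P PX) (fP Q QX); rewrite !inE E => /andP[fP' _] /andP[fQ _].
  exact: (triv_eq triv PX QX fP' fQ).
move=> P PX; apply/set0Pn; exists (f P); rewrite inE imset_f //.
by move: (fP P PX); rewrite inE => /andP[].
Qed.

End G.

Lemma kres_sup (T : finType) (e : rel T) k (A A' : {set T}) :
  A \subset A' -> k_resolving e k A -> k_resolving e k A'.
Proof.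
move=> sub H x y nxy; case: (H x y nxy) => z zA ne; exists z => //; exact: (subsetP sub).
Qed.

Lemma kres_succ (T : finType) (e : rel T) k (W : {set T}) :
  k_resolving e k W -> k_resolving e k.+1 W.
Proof.
move=> H x y nxy; case: (H x y nxy) => z zW ne; exists z => //.
move: ne; rewrite /dist_k => ne E; apply: ne; lia.
Qed.

Theorem mainTheorem8 (T : finType) (e : rel T) (k : nat) :
  symmetric e -> irreflexive e -> (forall x y : T, connect e x y) ->
  1 < #|T| -> 0 < k ->
  (* (a) *)
  (outcome_M (k_resolving e k) ->
     [/\ dim_k e k <= M_moves (k_resolving e k),
         M_moves (k_resolving e k) <= M'_moves (k_resolving e k),
         M'_moves (k_resolving e k) <= #|T| %/ 2,
         M_moves (k_resolving e k.+1) <= M_moves (k_resolving e k) &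
         M'_moves (k_resolving e k.+1) <= M'_moves (k_resolving e k)]) /\
  (* (b) *)
  (outcome_B (k_resolving e k) ->
     [/\ B'_moves (k_resolving e k) <= B_moves (k_resolving e k),
         B_moves (k_resolving e k) <= #|T| %/ 2 &
         (1 < k ->
            B_moves (k_resolving e k.-1) <= B_moves (k_resolving e k) /\
            B'_moves (k_resolving e k.-1) <= B'_moves (k_resolving e k))]) /\
  (* (c) *)
  ((diam e = 1 \/ diam e = 2 \/ (diam e).-1 <= k) ->
     (outcome_M (resolving e) ->
        M_moves (k_resolving e k) = M_moves (resolving e) /\
        M'_moves (k_resolving e k) = M'_moves (resolving e)) /\
     (outcome_B (resolving e) ->
        B_moves (k_resolving e k) = B_moves (resolving e) /\
        B'_moves (k_resolving e k) = B'_moves (resolving e))) /\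
  (* (d) *)
  (forall X : {set {set T}}, pairing_res (k_resolving e k) X ->
     #|cover X| = 2 * dim_k e k ->
     M_moves (k_resolving e k) = dim_k e k /\
     M'_moves (k_resolving e k) = dim_k e k) /\
  (* (e) *)
  (forall X : {set {set T}}, quasi_pairing_res (k_resolving e k) X ->
     #|cover X| = 2 * (dim_k e k - 1) ->
     outcome_N (k_resolving e k) ->
     N_moves (k_resolving e k) = dim_k e k).
Proof.
move=> _ _ _ n2 k0.
have : 0 < #|T| by lia.
case/card_gt0P => x0 _.
set S := k_resolving e k.
have Hsup : forall A A' : {set T}, A \subset A' -> S A -> S A' by move=> A A'; apply: kres_sup.
have dimle : forall m M B t, MW S m M B t -> M = set0 -> dim_k e k <= m.
  move=> m M B t H M0; have [W [SW cW]] := MW_size H.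
  rewrite M0 cards0 /= in cW; apply: leq_trans cW.
  rewrite /dim_k.
  exact: (nat_min_spec (P := fun m => exists W, k_resolving e k W /\ #|W| = m)
            (ex_intro _ W (conj SW erefl))).2 _ (ex_intro _ W (conj SW erefl)).
have nT : #|~: (set0 :|: (set0 : {set T}))| = #|T| by rewrite setU0 setC0 cardsT.
split.
  move=> [[m1 H1] [m2 H2]].
  have [HM1 minM1] := nat_min_spec (P := fun m => MW S m set0 set0 true) H1.
  have [HM2 minM2] := nat_min_spec (P := fun m => MW S m set0 set0 false) H2.
  rewrite /M_moves /M'_moves; split.
  - exact: dimle HM1 erefl.
  - exact: minM1 _ (MW_swap Hsup HM2).
  - by have := MW_bound HM2; rewrite nT => /minM2.
  - have H := MW_S_mono (S' := k_resolving e k.+1) (@kres_succ _ e k) HM1.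
    exact: (nat_min_spec (P := fun m => MW (k_resolving e k.+1) m set0 set0 true) H).2 _ H.
  - have H := MW_S_mono (S' := k_resolving e k.+1) (@kres_succ _ e k) HM2.
    exact: (nat_min_spec (P := fun m => MW (k_resolving e k.+1) m set0 set0 false) H).2 _ H.
split.
  move=> [[m1 H1] [m2 H2]].
  have [HB1 minB1] := nat_min_spec (P := fun m => BW S m set0 set0 true) H1.
  have [HB2 minB2] := nat_min_spec (P := fun m => BW S m set0 set0 false) H2.
  rewrite /B_moves /B'_moves; split.
  - exact: minB2 _ (BW_swap Hsup HB1).
  - by have := BW_bound HB1; rewrite nT => /minB1.
  - move=> k1.
    have sub : forall W, k_resolving e k.-1 W -> S W.
      move=> W /kres_succ; by rewrite prednK.
    have H := BW_S_mono sub HB1; have H' := BW_S_mono sub HB2.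
    split.
      exact: (nat_min_spec (P := fun m => BW (k_resolving e k.-1) m set0 set0 true) H).2 _ H.
    exact: (nat_min_spec (P := fun m => BW (k_resolving e k.-1) m set0 set0 false) H').2 _ H'.
split.
  move=> hd.
  have dk : diam e <= k.+1 by case: hd => [->|[->|]]; lia.
  have Heq : S = resolving e.
    rewrite /S /k_resolving /resolving; congr resolving_by.
    apply: functional_extensionality => x; apply: functional_extensionality => y.
    rewrite /dist_k; apply/minn_idPl; apply: leq_trans dk.
    rewrite /diam; apply: leq_trans (leq_bigmax x); exact: (leq_bigmax y).
  by rewrite Heq.
have cov2 : forall X : {set {set T}}, pair_family X -> #|cover X| = 2 * #|X|.
  move=> X [_ [triv two]]; move: triv; rewrite /trivIset => /eqP <-.
  rewrite (eq_bigr (fun _ => 2)) => [|P PX]; last exact: two.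
  by rewrite sum_nat_const mulnC.
have Hwin0 : forall (X : {set {set T}}) (M0 : {set T}) (Sx : {set T} -> Prop),
  trivIset X -> (forall Z, Defs.transversal X Z -> Sx Z) ->
  (forall Z, Sx Z -> forall M : {set T}, M0 \subset M -> Z \subset M -> S M) ->
  forall M : {set T}, M0 \subset M -> (forall P, P \in X -> P :&: M != set0) -> S M.
  move=> X M0 Sx triv HZ HS M s0 hit.
  have [Z ZM tZ] := transv_of x0 triv hit.
  exact: HS _ (HZ Z tZ) M s0 ZM.
split.
  move=> X [[Xpos [triv two]] HZ] cov.
  have pf : pair_family X by [].
  have cX : #|X| = dim_k e k by move: cov; rewrite cov2 //; lia.
  have W : MW S #|X| set0 set0 false.
    apply: (pairing_win triv two (M0 := set0)).
    - apply: (Hwin0 X set0 S triv HZ) => Z SZ M _ ZM; exact: Hsup SZ.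
    - split; first exact: sub0set.
      by move=> P PX; rewrite setU0 setI0 eqxx.
    - apply: subset_leq_card; apply/subsetP => P; by rewrite inE => /andP[].
  have W' := MW_swap Hsup W.
  have [HM1 minM1] := nat_min_spec (P := fun m => MW S m set0 set0 true) W'.
  have [HM2 minM2] := nat_min_spec (P := fun m => MW S m set0 set0 false) W.
  have a1 := dimle _ _ _ _ HM1 erefl.
  have a2 := minM1 _ (MW_swap Hsup HM2).
  have a3 := minM2 _ W.
  rewrite /M_moves /M'_moves; lia.
move=> X [[Xpos [triv two]] _ [v vnc Hv]] cov _.
have pf : pair_family X by [].
have cX : #|X|.+1 = dim_k e k by move: cov; rewrite cov2 //; lia.
have W : MW S #|X| [set v] set0 false.
  apply: (pairing_win triv two (M0 := [set v])).
  - apply: (Hwin0 X [set v] (fun Z => S (v |: Z)) triv Hv) => Z SZ M s0 ZM.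
    apply: Hsup SZ; by rewrite subUset s0 ZM.
  - split; first exact: subxx.
    move=> P PX; rewrite setU0; apply/orP; left; apply/eqP/setP => y.
    rewrite !inE; apply/negP => /andP[yP /eqP yv]; move: vnc; rewrite -yv.
    by move/negP; apply; apply/bigcupP; exists P.
  - apply: subset_leq_card; apply/subsetP => P; by rewrite inE => /andP[].
have W1 : MW S #|X|.+1 set0 set0 true.
  apply: (MW_maker (v := v)); first by rewrite !inE.
  by rewrite setU0.
have [HM1 minM1] := nat_min_spec (P := fun m => MW S m set0 set0 true) W1.
have a1 := dimle _ _ _ _ HM1 erefl.
have a2 := minM1 _ W1.
rewrite /N_moves; lia.
Qed.
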